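(* The complex conjugation map $\mathrm{Conj}:K\to K$, $$(z_1,\dots,z_{n-1};A^{(0)},(a_0^{(1)},A^{(1)}),\dots,(a_0^{(n)},A^{(n)}))\mapsto(\bar z_1,\dots,\bar z_{n-1};\overline{A^{(0)}},(\overline{a_0^{(1)}},\overline{A^{(1)}}),\dots,(\overline{a_0^{(n)}},\overline{A^{(n)}})),$$ is a partial operad automorphism of the sphere partial operad $K$; in particular, for $P\in K(m)$, $Q\in K(n)$ and $1\le i\le m$ such that $P\,{}_i\infty_0\,Q$ exists, $\overline{P}\,{}_i\infty_0\,\overline{Q}$ exists and $\overline{P\,{}_i\infty_0\,Q}=\overline{P}\,{}_i\infty_0\,\overline{Q}$, where $\overline{R}:=\mathrm{Conj}(R)$.
   Context: Sphere partial operad $K=\{K(n)\}_{n\in\mathbb{N}}$: $K(n)$ is the moduli space of conformal equivalence classes of spheres with tubes of type $n$, i.e. Riemann spheres with one negatively oriented puncture and $n$ ordered positively oriented punctures, each equipped with a local analytic coordinate vanishing at the puncture (equivalence: biholomorphisms preserving punctures, their order and the germs of the local coordinates). For $n\ge1$ each class has a unique canonical representative: $\hat{\mathbb{C}}$ with negative puncture at $\infty$ with local coordinate $f_0(w)=-\exp\big(-\sum_{j\ge1}A^{(0)}_jw^{-j+1}\frac{d}{dw}\big)\frac1w$ (so $\lim_{w\to\infty}wf_0(w)=-1$), positive punctures $z_1,\dots,z_{n-1}\in\mathbb{C}^\times$ and $z_n=0$ (pairwise distinct), with local coordinates $f_i(w)=\exp\big(\sum_{j\ge1}A^{(i)}_jx^{j+1}\frac{d}{dx}\big)(a_0^{(i)})^{x\frac{d}{dx}}x\big|_{x=w-z_i}$,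 where $a_0^{(i)}\in\mathbb{C}^\times$ and $A^{(i)}=(A^{(i)}_j)_{j\ge1}$ are complex sequences for which these series converge near $0$; this class is denoted $(z_1,\dots,z_{n-1};A^{(0)},(a_0^{(1)},A^{(1)}),\dots,(a_0^{(n)},A^{(n)}))$ (for $n=0$ only $A^{(0)}$ with $A^{(0)}_1=0$ remains). Bars denote componentwise complex conjugation. Sewing: for $P\in K(m)$, $Q\in K(n)$, $1\le i\le m$, let $f_i$ be the local coordinate at the $i$-th positive puncture $p$ of $P$ and $g_0$ the one at the negative puncture $q$ of $Q$; if there is $r>0$ with $p$ the only puncture in $f_i^{-1}(\overline{B_r})$ and $q$ the only puncture in $g_0^{-1}(\overline{B_{1/r}})$ ($B_r$ the open disk of radius $r$ about $0$), then $P\,{}_i\infty_0\,Q\in K(m+n-1)$ is the class of the sphere obtained by removing $f_i^{-1}(B_r)$ and $g_0^{-1}(B_{1/r})$ and gluing the boundaries via $g_0^{-1}\circ J\circ f_i$, $J(w)=-1/w$, keeping $P$'s negative puncture and ordering the positive punctures as the first $i-1$ of $P$, then those of $Q$, then the remaining ones of $P$. With these partial substitution maps, the identity $(\,;\mathbf{0},(1,\mathbf{0}))\in K(1)$ and the $S_n$-actions permuting positive punctures, $K$ is a partial operad. A partial operad automorphism is a family of bijections $K(n)\to K(n)$ fixing the identity, commuting with the symmetric group actions, and compatible with sewing (whenever $P\,{}_i\infty_0\,Q$ exists, the image sewing exists and equals the image of $P\,{}_i\infty_0\,Q$). *)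

(* Defs.v *)
From Stdlib Require Import Reals Arith ClassicalEpsilon.
From Coquelicot Require Import Coquelicot.

Open Scope R_scope.

(* Riemann sphere  Chat = C u {oo}, None = oo                           *)
Definition Chat := option C.

Definition Csub (a b : C) : C := Cplus a (Copp b).

Fixpoint cpow (u : C) (m : nat) : C :=
  match m with O => RtoC 1 | S k => Cmult u (cpow u k) end.

Definition cball (x : Chat) (e : R) : Chat -> Prop :=
  match x with
  | Some z => fun y => exists w, y = Some w /\ Cmod (Csub w z) < e
  | None => fun y => y = None \/ exists w, y = Some w /\ e * Cmod w > 1
  end.

Definition near_hat (x : Chat) (P : Chat -> Prop) : Prop :=
  exists e, 0 < e /\ forall y, cball x e y -> P y.
Definition near_C (z : C) (P : C -> Prop) : Prop :=
  exists e, 0 < e /\ forall w, Cmod (Csub w z) < e -> P w.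
Definition openC (V : C -> Prop) : Prop := forall z, V z -> near_C z V.

(* standard charts of the Riemann sphere centred at x (chart value 0 at x) *)
Definition loc (x : Chat) (y : Chat) : C :=
  match x, y with
  | Some z, Some w => Csub w z
  | None, Some w => Cinv w
  | _, None => RtoC 0
  end.
Definition emb (x : Chat) (u : C) : Chat :=
  match x with
  | Some z => Some (Cplus u z)
  | None => if excluded_middle_informative (u = RtoC 0) then None
            else Some (Cinv u)
  end.

Definition holoCH (g : C -> Chat) (u0 : C) : Prop :=
  (forall e, 0 < e -> near_C u0 (fun u => cball (g u0) e (g u))) /\
  ex_derive (fun u : C => loc (g u0) (g u)) u0.
Definition holoHH (F : Chat -> Chat) (x : Chat) : Prop :=
  holoCH (fun u => F (emb x u)) (RtoC 0).

(* sequences A : nat -> C are indexed so that A j = A_j (A 0 unused)    *)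
Fixpoint sumC (n : nat) (f : nat -> C) : C :=
  match n with O => RtoC 0 | S k => Cplus (sumC k f) (f k) end.

(* coefficients of D g, D = sum_{j>=1} A_j x^{j+1} d/dx *)
Definition Dop (A : nat -> C) (g : nat -> C) : nat -> C :=
  fun m => sumC m (fun j => match j with
                          | O => RtoC 0
                          | S _ => Cmult (A j) (Cmult (RtoC (INR (m - j)%nat)) (g (m - j)%nat))
                          end).
Definition xcoef : nat -> C := fun m => if Nat.eqb m 1 then RtoC 1 else RtoC 0.
Definition powD (A : nat -> C) (k : nat) : nat -> C := Nat.iter k (Dop A) xcoef.
(* coefficient of x^m in exp(D) x *)
Definition expcoef (A : nat -> C) (m : nat) : C :=
  sumC (S m) (fun k => Cdiv (powD A k m) (RtoC (INR (fact k)))).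

Definition conv (A : nat -> C) : Prop :=
  exists rho, 0 < rho /\ forall u, Cmod u < rho ->
    ex_series (fun m => Cmult (expcoef A m) (cpow u m)).

(* Canonical representatives of elements of K(n)                        *)
Record KD := mkKD {
  zs : nat -> C;            (* zs k = z_k, 1 <= k <= n-1 *)
  A0 : nat -> C;            (* A0 j = A^(0)_j, j >= 1 *)
  a0s : nat -> C;           (* a0s k = a_0^(k), 1 <= k <= n *)
  As : nat -> nat -> C      (* As k j = A^(k)_j, 1 <= k <= n, j >= 1 *)
}.

(* membership in K(n); unused entries are normalised to 0 so that
   elements of K(n) correspond bijectively to [{d | valid n d}] *)
Definition valid (n : nat) (d : KD) : Prop :=
  (forall k, ~ (1 <= k <= n - 1)%nat -> zs d k = RtoC 0) /\
  (forall k, ~ (1 <= k <= n)%nat -> a0s d k = RtoC 0 /\ forall j, As d k j = RtoC 0) /\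
  A0 d 0%nat = RtoC 0 /\ (forall k, As d k 0%nat = RtoC 0) /\
  conv (A0 d) /\
  (n = 0%nat -> A0 d 1%nat = RtoC 0) /\
  (forall k, (1 <= k <= n - 1)%nat -> zs d k <> RtoC 0) /\
  (forall k l, (1 <= k <= n - 1)%nat -> (1 <= l <= n - 1)%nat -> k <> l -> zs d k <> zs d l) /\
  (forall k, (1 <= k <= n)%nat -> a0s d k <> RtoC 0 /\ conv (As d k)).

Definition pts (n : nat) (d : KD) (k : nat) : Chat :=
  if Nat.eqb k 0 then None
  else if Nat.eqb k n then Some (RtoC 0) else Some (zs d k).

(* local coordinates, as (functional) relations "f_k(x) = v":
   f_0(w) = -exp(-sum A_j w^{-j+1} d/dw)(1/w) = - exp(sum A_j u^{j+1} d/du) u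
   with u = 1/w (change of variables), and
   f_k(w) = exp(sum A_j x^{j+1} d/dx) a0^{x d/dx} x at x = w - z_k
          = a0 * exp(sum A_j x^{j+1} d/dx) x. *)
Definition lc (n : nat) (d : KD) (k : nat) (x : Chat) (v : C) : Prop :=
  if Nat.eqb k 0 then
    is_series (fun m => Copp (Cmult (expcoef (A0 d) m) (cpow (loc None x) m))) v
  else
    is_series (fun m => Cmult (a0s d k)
                 (Cmult (expcoef (As d k) m) (cpow (loc (pts n d k) x) m))) v.

Definition idK : KD :=
  mkKD (fun _ => RtoC 0) (fun _ => RtoC 0)
       (fun k => if Nat.eqb k 1 then RtoC 1 else RtoC 0) (fun _ _ => RtoC 0).

Definition isPerm (n : nat) (s : nat -> nat) : Prop :=
  (forall k, (1 <= k <= n)%nat -> (1 <= s k <= n)%nat) /\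
  (forall k l, (1 <= k <= n)%nat -> (1 <= l <= n)%nat -> s k = s l -> k = l).

(* the sphere with tubes of P, its positive punctures reordered by s
   (new k-th puncture = old (s k)-th), is conformally equivalent to R *)
Definition PermRel (n : nat) (s : nat -> nat) (P R : KD) : Prop :=
  let s' := fun k => if Nat.eqb k 0 then 0%nat else s k in
  exists T Tinv : Chat -> Chat,
    (forall x, holoHH T x) /\ (forall x, holoHH Tinv x) /\
    (forall x, Tinv (T x) = x) /\ (forall y, T (Tinv y) = y) /\
    (forall k, (k <= n)%nat -> T (pts n P (s' k)) = pts n R k) /\
    (forall k, (k <= n)%nat ->
       near_hat (pts n P (s' k))
         (fun x => forall v, lc n P (s' k) x v <-> lc n R k (T x) v)).

(* phi : a representative of f_i^{-1} on a neighbourhood of the closed  *)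
(*       disk |w| <= r (so f_i^{-1}(B_r) = phi(B_r));                   *)
(* psi : a representative of g_0^{-1} on a neighbourhood of |w| <= 1/r. *)
Definition invDisk (g : C -> Chat) (rad : R) (p : Chat) (L : Chat -> C -> Prop) : Prop :=
  (exists V, openC V /\ (forall w, Cmod w <= rad -> V w) /\
     (forall w, V w -> holoCH g w) /\
     (forall w1 w2, V w1 -> V w2 -> g w1 = g w2 -> w1 = w2)) /\
  g (RtoC 0) = p /\ near_C (RtoC 0) (fun w => L (g w) w).

Definition SewData (m n : nat) (P : KD) (i : nat) (Q : KD)
    (r : R) (phi psi : C -> Chat) : Prop :=
  0 < r /\
  invDisk phi r (pts m P i) (lc m P i) /\
  invDisk psi (/ r) (pts n Q 0) (lc n Q 0) /\
  (forall k, (k <= m)%nat -> k <> i -> forall w, Cmod w <= r -> phi w <> pts m P k) /\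
  (forall k, (1 <= k <= n)%nat -> forall w, Cmod w <= / r -> psi w <> pts n Q k).

Definition SewExists (m n : nat) (P : KD) (i : nat) (Q : KD) : Prop :=
  exists r phi psi, SewData m n P i Q r phi psi.

(* the sewn sphere is conformally equivalent to R: F1, F2 are the
   restrictions to the two pieces of a biholomorphism from the sewn
   surface onto R's sphere *)
Definition Glue (m n : nat) (P : KD) (i : nat) (Q Rk : KD)
    (r : R) (phi psi : C -> Chat) : Prop :=
  let X1 := fun x => forall w, Cmod w < r -> phi w <> x in
  let X2 := fun x => forall w, Cmod w < / r -> psi w <> x in
  let N := (m + n - 1)%nat in
  exists F1 F2 : Chat -> Chat,
    (forall x y, X1 x -> X1 y -> F1 x = F1 y -> x = y) /\
    (forall x y, X2 x -> X2 y -> F2 x = F2 y -> x = y) /\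
    (forall w, Cmod w = r -> F1 (phi w) = F2 (psi (Copp (Cinv w)))) /\
    (forall x y, X1 x -> X2 y -> F1 x = F2 y ->
       exists w, Cmod w = r /\ x = phi w /\ y = psi (Copp (Cinv w))) /\
    (forall y, (exists x, X1 x /\ F1 x = y) \/ (exists x, X2 x /\ F2 x = y)) /\
    (* holomorphy: in the interiors of the pieces ... *)
    (forall x, (forall w, Cmod w <= r -> phi w <> x) -> holoHH F1 x) /\
    (forall x, (forall w, Cmod w <= / r -> psi w <> x) -> holoHH F2 x) /\
    (* ... and in the annular chart around the seam *)
    (exists delta, 0 < delta /\ forall w, r - delta < Cmod w < r + delta ->
       holoCH (fun u => if Rle_dec r (Cmod u) then F1 (phi u)
                        else F2 (psi (Copp (Cinv u)))) w) /\
    F1 (pts m P 0) = pts N Rk 0 /\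
    (forall k, (1 <= k < i)%nat -> F1 (pts m P k) = pts N Rk k) /\
    (forall k, (1 <= k <= n)%nat -> F2 (pts n Q k) = pts N Rk (i + k - 1)) /\
    (forall k, (i < k <= m)%nat -> F1 (pts m P k) = pts N Rk (k + n - 1)) /\
    near_hat (pts m P 0) (fun x => forall v, lc m P 0 x v <-> lc N Rk 0 (F1 x) v) /\
    (forall k, (1 <= k < i)%nat ->
       near_hat (pts m P k) (fun x => forall v, lc m P k x v <-> lc N Rk k (F1 x) v)) /\
    (forall k, (1 <= k <= n)%nat ->
       near_hat (pts n Q k) (fun x => forall v, lc n Q k x v <-> lc N Rk (i + k - 1) (F2 x) v)) /\
    (forall k, (i < k <= m)%nat ->
       near_hat (pts m P k) (fun x => forall v, lc m P k x v <-> lc N Rk (k + n - 1) (F1 x) v)).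

Definition Sew (m n : nat) (P : KD) (i : nat) (Q Rk : KD) : Prop :=
  exists r phi psi, SewData m n P i Q r phi psi /\ Glue m n P i Q Rk r phi psi.

Definition IsPartialOperadAut (Phi : nat -> KD -> KD) : Prop :=
  (forall n d, valid n d -> valid n (Phi n d)) /\
  (forall n d1 d2, valid n d1 -> valid n d2 -> Phi n d1 = Phi n d2 -> d1 = d2) /\
  (forall n d, valid n d -> exists d', valid n d' /\ Phi n d' = d) /\
  Phi 1%nat idK = idK /\
  (forall n s, isPerm n s -> forall P R, valid n P -> valid n R ->
     PermRel n s P R -> PermRel n s (Phi n P) (Phi n R)) /\
  (forall m n i P Q, (1 <= i <= m)%nat -> valid m P -> valid n Q ->
     SewExists m n P i Q ->
     SewExists m n (Phi m P) i (Phi n Q) /\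
     forall R, valid (m + n - 1) R -> Sew m n P i Q R ->
       Sew m n (Phi m P) i (Phi n Q) (Phi (m + n - 1)%nat R)).

Definition ConjK (d : KD) : KD :=
  mkKD (fun k => Cconj (zs d k)) (fun j => Cconj (A0 d j))
       (fun k => Cconj (a0s d k)) (fun k j => Cconj (As d k j)).

(* Main.v *)
Require Import Defs.
From Stdlib Require Import Reals Lra FunctionalExtensionality ClassicalEpsilon.
From Coquelicot Require Import Coquelicot.


Definition cc (x : Chat) : Chat := match x with Some z => Some (Cconj z) | None => None end.
Lemma cc_inv x : cc (cc x) = x.
Proof. destruct x; simpl; auto; rewrite Cconj_conj; auto. Qed.
Lemma cc_inj x y : cc x = cc y -> x = y.
Proof. intros H. rewrite <- (cc_inv x), <- (cc_inv y), H. auto. Qed.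

Lemma conj0 : Cconj (RtoC 0) = RtoC 0.
Proof. apply injective_projections; simpl; lra. Qed.
Lemma conjR r : Cconj (RtoC r) = RtoC r.
Proof. apply injective_projections; simpl; lra. Qed.
Lemma conj_inv z : Cconj (Cinv z) = Cinv (Cconj z).
Proof.
  destruct (Ceq_dec z 0) as [->|H].
  - unfold Cinv, Cconj; simpl.
    apply injective_projections; simpl; unfold Rdiv; rewrite ?Rmult_0_l, ?Ropp_0, ?Rmult_0_l, ?Rplus_0_l, ?Rinv_0; ring.
  - apply Cinv_conj; auto.
Qed.
Lemma conj_eq0 z : Cconj z = RtoC 0 <-> z = RtoC 0.
Proof. split; intros H. rewrite <- (Cconj_conj z), H, conj0; auto. rewrite H, conj0; auto. Qed.
Lemma conj_inj a b : Cconj a = Cconj b -> a = b.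
Proof. intros H. rewrite <- (Cconj_conj a), H, Cconj_conj; auto. Qed.

Lemma loc_cc a b : loc (cc a) (cc b) = Cconj (loc a b).
Proof.
  destruct a, b; simpl; unfold Csub; try rewrite conj0; auto.
  rewrite Cplus_conj, Copp_conj; auto. symmetry; apply conj_inv.
Qed.
Lemma emb_cc x u : cc (emb x u) = emb (cc x) (Cconj u).
Proof.
  destruct x; simpl. rewrite Cplus_conj; auto.
  destruct (excluded_middle_informative (u = RtoC 0)) as [H|H];
  destruct (excluded_middle_informative (Cconj u = RtoC 0)) as [H'|H']; simpl; auto.
  - exfalso; apply H'; rewrite H; apply conj0.
  - exfalso; apply H; apply conj_eq0; auto.
  - rewrite conj_inv; auto.
Qed.
Lemma cball_cc x e y : cball (cc x) e (cc y) <-> cball x e y.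
Proof.
  destruct x as [z|], y as [w|]; simpl; split.
  - intros [w' [H1 H2]]. inversion H1; subst. exists w; split; auto.
    unfold Csub in *. rewrite <- Copp_conj, <- Cplus_conj, Cmod_conj in H2; auto.
  - intros [w' [H1 H2]]. inversion H1; subst. exists (Cconj w'); split; auto.
    unfold Csub in *. rewrite <- Copp_conj, <- Cplus_conj, Cmod_conj; auto.
  - intros [w' [H1 _]]; discriminate.
  - intros [w' [H1 _]]; discriminate.
  - intros [H|[w' [H1 H2]]]; [discriminate|]. inversion H1; subst. right; exists w; split; auto.
    rewrite Cmod_conj in H2; auto.
  - intros [H|[w' [H1 H2]]]; [discriminate|]. inversion H1; subst. right; exists (Cconj w'); split; auto.
    rewrite Cmod_conj; auto.
  - auto.
  - auto.
Qed.
Lemma near_hat_cc x P : near_hat x P -> near_hat (cc x) (fun y => P (cc y)).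
Proof.
  intros [e [He H]]. exists e; split; auto. intros y Hy. apply H.
  apply cball_cc. rewrite cc_inv. exact Hy.
Qed.
Lemma near_C_conj z P : near_C z P -> near_C (Cconj z) (fun w => P (Cconj w)).
Proof.
  intros [e [He H]]. exists e; split; auto. intros w Hw. apply H.
  unfold Csub in *. rewrite <- (Cmod_conj), Cplus_conj, Copp_conj, Cconj_conj; auto.
Qed.
Lemma openC_conj V : openC V -> openC (fun w => V (Cconj w)).
Proof.
  intros H z Hz. apply H in Hz. apply near_C_conj in Hz. rewrite Cconj_conj in Hz. auto.
Qed.

Lemma locally_conj (x : C) (P : C -> Prop) : locally x P -> locally (Cconj x) (fun y => P (Cconj y)).
Proof.
  intros [eps H]. exists eps. intros y [H1 H2]. apply H. split.
  - revert H1. destruct x, y. unfold ball; simpl. unfold AbsRing_ball; simpl. auto.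
  - revert H2. destruct x, y. unfold ball; simpl. unfold AbsRing_ball; simpl.
    unfold abs, minus, plus, opp; simpl. intros. rewrite <- Rabs_Ropp. replace (- (- r2 + - r0)) with (r2 + - - r0) by ring. auto.
Qed.

Lemma locally_conj' (x : AbsRing_NormedModule C_AbsRing) (P : AbsRing_NormedModule C_AbsRing -> Prop) :
  locally x P -> locally (Cconj x : AbsRing_NormedModule C_AbsRing) (fun y => P (Cconj y)).
Proof.
  intros [eps H]. exists eps. intros y Hy. apply H.
  change (Cmod (Cconj y - x)%C < eps). change (Cmod (y - Cconj x)%C < eps) in Hy.
  rewrite <- Cmod_conj, Cminus_conj, Cconj_conj. exact Hy.
Qed.

Lemma sum_n_conj (a : nat -> C) n : sum_n (fun m => Cconj (a m)) n = Cconj (sum_n a n).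
Proof.
  induction n. rewrite !sum_O; auto.
  rewrite !sum_Sn, IHn. change (Cconj (sum_n a n) + Cconj (a (S n)) = Cconj (sum_n a n + a (S n)))%C.
  rewrite Cplus_conj; auto.
Qed.

Lemma is_series_conj (a : nat -> C) l : is_series a l -> is_series (fun m => Cconj (a m)) (Cconj l).
Proof.
  intros H. unfold is_series in *.
  apply filterlim_ext with (fun n => Cconj (sum_n a n)).
  intros; rewrite sum_n_conj; auto.
  apply filterlim_comp with (1 := H).
  intros P HP. apply locally_conj in HP. rewrite Cconj_conj in HP. exact HP.
Qed.

Lemma is_series_conj_iff (a : nat -> C) l : is_series (fun m => Cconj (a m)) (Cconj l) <-> is_series a l.
Proof.
  split; [|apply is_series_conj]. intros H. apply is_series_conj in H.
  rewrite Cconj_conj in H. eapply is_series_ext; [|exact H]. intros; simpl; apply Cconj_conj.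
Qed.

Lemma ex_series_conj (a : nat -> C) : ex_series a -> ex_series (fun m => Cconj (a m)).
Proof. intros [l H]. exists (Cconj l). apply is_series_conj; auto. Qed.

Lemma ex_derive_conj (h : C -> C) x : ex_derive h x -> ex_derive (fun u => Cconj (h (Cconj u))) (Cconj x).
Proof.
  intros [l [Hlin H]]. exists (Cconj l). split.
  - apply is_linear_scal_l.
  - intros y Hy. apply (@is_filter_lim_locally_unique _ (AbsRing_NormedModule C_AbsRing)) in Hy. subst y.
    intros eps. specialize (H x (fun P HP => HP) eps).
    apply locally_conj' in H. revert H. apply filter_imp. intros z Hz.
    change (Cmod ((Cconj (h (Cconj z)) - Cconj (h (Cconj (Cconj x)))) - (z - Cconj x) * Cconj l)%C
       <= eps * Cmod (z - Cconj x)%C).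
    change (Cmod ((h (Cconj z) - h x) - (Cconj z - x) * l)%C <= eps * Cmod (Cconj z - x)%C) in Hz.
    rewrite Cconj_conj. rewrite <- (Cmod_conj (z - Cconj x)%C), <- (Cmod_conj (_ - _)%C).
    repeat (rewrite ?Cminus_conj, ?Cmult_conj, ?Cconj_conj). exact Hz.
Qed.

Lemma holoCH_conj g u0 : holoCH g u0 -> holoCH (fun u => cc (g (Cconj u))) (Cconj u0).
Proof.
  intros [H1 H2]. split.
  - intros e He. specialize (H1 e He). apply near_C_conj in H1. rewrite Cconj_conj.
    revert H1. intros [d [Hd H]]. exists d; split; auto. intros w Hw. apply cball_cc. auto.
  - rewrite Cconj_conj.
    apply ex_derive_ext with (fun u => Cconj (loc (g u0) (g (Cconj u)))).
    intros; rewrite loc_cc; auto.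
    apply (ex_derive_conj (fun u => loc (g u0) (g u))). exact H2.
Qed.

Lemma holoHH_conj F x : holoHH F (cc x) -> holoHH (fun y => cc (F (cc y))) x.
Proof.
  unfold holoHH. intros H. apply (holoCH_conj (fun u => F (emb (cc x) u))) in H. rewrite conj0 in H.
  replace (fun u => cc (F (cc (emb x u)))) with (fun u => cc (F (emb (cc x) (Cconj u)))); auto.
  apply functional_extensionality; intros u. rewrite emb_cc; auto.
Qed.

Lemma sumC_conj n f : Cconj (sumC n f) = sumC n (fun k => Cconj (f k)).
Proof. induction n; simpl. apply conj0. rewrite Cplus_conj, IHn; auto. Qed.

Definition cA (A : nat -> C) : nat -> C := fun j => Cconj (A j).

Lemma Dop_conj A g m : Cconj (Dop A g m) = Dop (cA A) (fun k => Cconj (g k)) m.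
Proof.
  unfold Dop. rewrite sumC_conj. f_equal. apply functional_extensionality; intros [|j].
  apply conj0. unfold cA. rewrite !Cmult_conj, conjR; auto.
Qed.

Lemma powD_conj A k m : Cconj (powD A k m) = powD (cA A) k m.
Proof.
  revert m; induction k; intros m; simpl.
  - unfold xcoef. destruct (Nat.eqb m 1); apply conjR.
  - change (Cconj (Dop A (powD A k) m) = Dop (cA A) (powD (cA A) k) m).
    rewrite Dop_conj. f_equal. apply functional_extensionality; auto.
Qed.

Lemma Cdiv_R_conj a r : Cconj (Cdiv a (RtoC r)) = Cdiv (Cconj a) (RtoC r).
Proof.
  unfold Cdiv. rewrite Cmult_conj, conj_inv, conjR; auto.
Qed.

Lemma expcoef_conj A m : Cconj (expcoef A m) = expcoef (cA A) m.
Proof.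
  unfold expcoef. rewrite sumC_conj. f_equal. apply functional_extensionality; intros k.
  rewrite Cdiv_R_conj, powD_conj; auto.
Qed.

Lemma cpow_conj u m : Cconj (cpow u m) = cpow (Cconj u) m.
Proof. induction m; simpl. apply conjR. rewrite Cmult_conj, IHm; auto. Qed.

Lemma conv_conj A : conv A -> conv (cA A).
Proof.
  intros [rho [Hr H]]. exists rho; split; auto. intros u Hu.
  rewrite <- (Cmod_conj u) in Hu. apply H in Hu. apply ex_series_conj in Hu.
  revert Hu. apply ex_series_ext. intros m. rewrite Cmult_conj, expcoef_conj, cpow_conj, Cconj_conj; auto.
Qed.

Lemma pts_conj n d k : pts n (ConjK d) k = cc (pts n d k).
Proof.
  unfold pts. destruct (Nat.eqb k 0); auto. destruct (Nat.eqb k n); simpl; auto.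
  rewrite conj0; auto.
Qed.

Lemma lc_conj n d k x v : lc n (ConjK d) k (cc x) (Cconj v) <-> lc n d k x v.
Proof.
  unfold lc. destruct (Nat.eqb k 0).
  - rewrite <- is_series_conj_iff with (l := v). split; apply is_series_ext; intros m; [|symmetry];
    rewrite Copp_conj, Cmult_conj, expcoef_conj, cpow_conj;
    rewrite <- (loc_cc None x); reflexivity.
  - rewrite <- is_series_conj_iff with (l := v). split; apply is_series_ext; intros m; [|symmetry];
    rewrite !Cmult_conj, expcoef_conj, cpow_conj, pts_conj, <- loc_cc; reflexivity.
Qed.

Lemma lc_conj' n d k y v : lc n (ConjK d) k y v <-> lc n d k (cc y) (Cconj v).
Proof. rewrite <- (lc_conj n d k (cc y) (Cconj v)), cc_inv, Cconj_conj. tauto. Qed.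

Lemma near_hat_mono x (P Q : Chat -> Prop) : near_hat x P -> (forall y, P y -> Q y) -> near_hat x Q.
Proof. intros [e [He H]] HPQ. exists e; split; auto. Qed.

Lemma near_lc_conj a P k b R j F :
  near_hat (pts a P k) (fun x => forall v, lc a P k x v <-> lc b R j (F x) v) ->
  near_hat (pts a (ConjK P) k) (fun x => forall v, lc a (ConjK P) k x v <-> lc b (ConjK R) j (cc (F (cc x))) v).
Proof.
  intros H. rewrite pts_conj. apply near_hat_cc in H. eapply near_hat_mono; [exact H|].
  intros y Hy v. rewrite !lc_conj', cc_inv. apply Hy.
Qed.

Lemma valid_conj n d : valid n d -> valid n (ConjK d).
Proof.
  intros [H1 [H2 [H3 [H4 [H5 [H6 [H7 [H8 H9]]]]]]]]; simpl.
  split; [|split; [|split; [|split; [|split; [|split; [|split; [|split]]]]]]].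
  - intros k Hk. simpl. rewrite H1; auto; apply conj0.
  - intros k Hk. simpl. destruct (H2 k Hk) as [E1 E2]. rewrite E1. split. apply conj0. intros j; rewrite E2; apply conj0.
  - simpl. rewrite H3; apply conj0.
  - intros k. simpl. rewrite H4; apply conj0.
  - apply (conv_conj _ H5).
  - intros Hn. simpl. rewrite H6; auto; apply conj0.
  - intros k Hk Hc. simpl in Hc; apply (proj1 (conj_eq0 _)) in Hc. apply (H7 k Hk Hc).
  - intros k l Hk Hl Hkl Hc. simpl in Hc; apply conj_inj in Hc. apply (H8 k l Hk Hl Hkl Hc).
  - intros k Hk. split. intros Hc. simpl in Hc; apply (proj1 (conj_eq0 _)) in Hc. apply (proj1 (H9 k Hk) Hc).
    apply (conv_conj _ (proj2 (H9 k Hk))).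
Qed.

Lemma ConjK_inv d : ConjK (ConjK d) = d.
Proof.
  destruct d; unfold ConjK; simpl. f_equal; repeat (apply functional_extensionality; intros); apply Cconj_conj.
Qed.

Lemma ConjK_id : ConjK idK = idK.
Proof.
  unfold ConjK, idK; simpl. f_equal; repeat (apply functional_extensionality; intros); try apply conj0.
  destruct (Nat.eqb x 1); apply conjR.
Qed.

Lemma perm_conj n s P R : PermRel n s P R -> PermRel n s (ConjK P) (ConjK R).
Proof.
  intros [T [Ti [HT [HTi [H1 [H2 [H3 H4]]]]]]].
  exists (fun y => cc (T (cc y))), (fun y => cc (Ti (cc y))).
  split; [|split; [|split; [|split; [|split]]]].
  - intros x. apply holoHH_conj. auto.
  - intros x. apply holoHH_conj. auto.
  - intros x. rewrite cc_inv, H1, cc_inv; auto.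
  - intros y. rewrite cc_inv, H2, cc_inv; auto.
  - intros k Hk. rewrite !pts_conj, cc_inv, H3; auto.
  - intros k Hk. apply near_lc_conj. auto.
Qed.

Definition cf (g : C -> Chat) : C -> Chat := fun w => cc (g (Cconj w)).
Definition cF (F : Chat -> Chat) : Chat -> Chat := fun x => cc (F (cc x)).

Lemma invDisk_conj g rad p (L L' : Chat -> C -> Prop) :
  (forall y w, L (cc y) (Cconj w) -> L' y w) ->
  invDisk g rad p L -> invDisk (cf g) rad (cc p) L'.
Proof.
  intros HL [[V [HV1 [HV2 [HV3 HV4]]]] [Hp HN]]. split; [|split].
  - exists (fun w => V (Cconj w)). split; [|split; [|split]].
    + apply openC_conj; auto.
    + intros w Hw. apply HV2. rewrite Cmod_conj; auto.
    + intros w Hw. unfold cf. rewrite <- (Cconj_conj w). apply holoCH_conj. auto.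
    + intros w1 w2 H1 H2 E. unfold cf in E. apply cc_inj in E. apply HV4 in E; auto.
      apply conj_inj; auto.
  - unfold cf. rewrite conj0, Hp. auto.
  - apply near_C_conj in HN. rewrite conj0 in HN. destruct HN as [e [He H]].
    exists e; split; auto. intros w Hw. apply HL. unfold cf. rewrite cc_inv. apply H; auto.
Qed.

Lemma sewdata_conj m n P i Q r phi psi :
  SewData m n P i Q r phi psi -> SewData m n (ConjK P) i (ConjK Q) r (cf phi) (cf psi).
Proof.
  intros [Hr [H1 [H2 [H3 H4]]]]. split; [|split; [|split; [|split]]]; auto.
  - rewrite pts_conj. apply (invDisk_conj _ _ _ (lc m P i)); auto.
    intros y w Hy. apply lc_conj'. auto.
  - rewrite pts_conj. apply (invDisk_conj _ _ _ (lc n Q 0)); auto.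
    intros y w Hy. apply lc_conj'. auto.
  - intros k Hk Hki w Hw E. unfold cf in E. rewrite pts_conj in E. apply cc_inj in E.
    apply (H3 k Hk Hki (Cconj w)); auto. rewrite Cmod_conj; auto.
  - intros k Hk w Hw E. unfold cf in E. rewrite pts_conj in E. apply cc_inj in E.
    apply (H4 k Hk (Cconj w)); auto. rewrite Cmod_conj; auto.
Qed.

Lemma conj_oppinv w : Cconj (Copp (Cinv w)) = Copp (Cinv (Cconj w)).
Proof. rewrite Copp_conj, conj_inv; auto. Qed.

Lemma glue_conj m n P i Q R r phi psi :
  Glue m n P i Q R r phi psi -> Glue m n (ConjK P) i (ConjK Q) (ConjK R) r (cf phi) (cf psi).
Proof.
  intros [F1 [F2 [G1 [G2 [G3 [G4 [G5 [G6 [G7 [G8 [G9 [G10 [G11 [G12 [G13 [G14 [G15 G16]]]]]]]]]]]]]]]]].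
  assert (X1c : forall x, (forall w, Cmod w < r -> cf phi w <> x) -> (forall w, Cmod w < r -> phi w <> cc x)).
  { intros x Hx w Hw E. apply (Hx (Cconj w)). rewrite Cmod_conj; auto. unfold cf. rewrite Cconj_conj, E, cc_inv; auto. }
  assert (X2c : forall x, (forall w, Cmod w < / r -> cf psi w <> x) -> (forall w, Cmod w < / r -> psi w <> cc x)).
  { intros x Hx w Hw E. apply (Hx (Cconj w)). rewrite Cmod_conj; auto. unfold cf. rewrite Cconj_conj, E, cc_inv; auto. }
  exists (cF F1), (cF F2).
  split; [|split; [|split; [|split; [|split; [|split; [|split; [|split; [|split; [|split; [|split; [|split; [|split; [|split; [|split]]]]]]]]]]]]]].
  - intros x y Hx Hy E. unfold cF in E. apply cc_inj in E. apply G1 in E; auto. apply cc_inj; auto.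
  - intros x y Hx Hy E. unfold cF in E. apply cc_inj in E. apply G2 in E; auto. apply cc_inj; auto.
  - intros w Hw. unfold cF, cf. rewrite !cc_inv, conj_oppinv. rewrite G3; auto. rewrite Cmod_conj; auto.
  - intros x y Hx Hy E. unfold cF in E. apply cc_inj in E. apply G4 in E; auto.
    destruct E as [w [Hw [E1 E2]]]. exists (Cconj w). split; [rewrite Cmod_conj; auto|].
    unfold cf. rewrite Cconj_conj, <- E1, conj_oppinv, Cconj_conj, <- E2, !cc_inv. auto.
  - intros y. destruct (G5 (cc y)) as [[x [Hx E]]|[x [Hx E]]]; [left|right]; exists (cc x); split.
    + intros w Hw E'. apply (Hx (Cconj w)). rewrite Cmod_conj; auto. unfold cf in E'. apply cc_inj. exact E'.
    + unfold cF. rewrite cc_inv, E, cc_inv; auto.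
    + intros w Hw E'. apply (Hx (Cconj w)). rewrite Cmod_conj; auto. unfold cf in E'. apply cc_inj. exact E'.
    + unfold cF. rewrite cc_inv, E, cc_inv; auto.
  - intros x Hx. apply holoHH_conj. apply G6. intros w Hw E. apply (Hx (Cconj w)). rewrite Cmod_conj; auto.
    unfold cf. rewrite Cconj_conj, E, cc_inv; auto.
  - intros x Hx. apply holoHH_conj. apply G7. intros w Hw E. apply (Hx (Cconj w)). rewrite Cmod_conj; auto.
    unfold cf. rewrite Cconj_conj, E, cc_inv; auto.
  - destruct G8 as [delta [Hd Hh]]. exists delta; split; auto. intros w Hw.
    set (G := fun u => if Rle_dec r (Cmod u) then F1 (phi u) else F2 (psi (Copp (Cinv u)))).
    replace (fun u => if Rle_dec r (Cmod u) then cF F1 (cf phi u) else cF F2 (cf psi (Copp (Cinv u))))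
      with (fun u => cc (G (Cconj u))).
    + rewrite <- (Cconj_conj w). apply holoCH_conj. apply Hh. rewrite Cmod_conj; auto.
    + apply functional_extensionality; intros u. unfold G, cF, cf. rewrite Cmod_conj.
      destruct (Rle_dec r (Cmod u)); rewrite ?cc_inv, ?conj_oppinv; auto.
  - unfold cF. rewrite !pts_conj, cc_inv, G9; auto.
  - intros k Hk. unfold cF. rewrite !pts_conj, cc_inv, G10; auto.
  - intros k Hk. unfold cF. rewrite !pts_conj, cc_inv, G11; auto.
  - intros k Hk. unfold cF. rewrite !pts_conj, cc_inv, G12; auto.
  - apply near_lc_conj; auto.
  - intros k Hk. apply near_lc_conj; auto.
  - intros k Hk. apply near_lc_conj; auto.
  - intros k Hk. apply near_lc_conj; auto.
Qed.

Theorem proposition2p15 : IsPartialOperadAut (fun _ => ConjK).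
Proof.
  split; [|split; [|split; [|split; [|split]]]].
  - intros n d Hd. apply valid_conj; auto.
  - intros n d1 d2 _ _ E. rewrite <- (ConjK_inv d1), <- (ConjK_inv d2), E. auto.
  - intros n d Hd. exists (ConjK d). split. apply valid_conj; auto. apply ConjK_inv.
  - apply ConjK_id.
  - intros n s _ P R _ _ H. apply perm_conj; auto.
  - intros m n i P Q _ _ _ [r [phi [psi H]]]. split.
    + exists r, (cf phi), (cf psi). apply sewdata_conj; auto.
    + intros R _ [r' [phi' [psi' [H1 H2]]]]. exists r', (cf phi'), (cf psi'). split.
      apply sewdata_conj; auto. apply glue_conj; auto.
Qed.
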